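(* Let $\mathcal R$ be a commutative ring with identity, $\mathcal M,\mathcal N$ modules over $\mathcal R$, $s\in\mathbb N$, $Y\in\mathcal M^{s\times s}$, and let $f_\ell:(\mathcal M^{s\times s})^\ell\to\mathcal N^{s\times s}$, $\ell=0,1,\dots$, be $\ell$-linear mappings ($f_0\in\mathcal N^{s\times s}$) such that for every $S\in\mathcal R^{s\times s}$ and $Z^1,\dots,Z^\ell\in\mathcal M^{s\times s}$: $Sf_0-f_0S=f_1(SY-YS)$; and for $\ell\ge1$: $Sf_\ell(Z^1,\dots,Z^\ell)-f_\ell(SZ^1,Z^2,\dots,Z^\ell)=f_{\ell+1}(SY-YS,Z^1,\dots,Z^\ell)$; for $1\le j\le\ell-1$: $f_\ell(Z^1,\dots,Z^{j-1},Z^jS,Z^{j+1},\dots,Z^\ell)-f_\ell(Z^1,\dots,Z^j,SZ^{j+1},Z^{j+2},\dots,Z^\ell)=f_{\ell+1}(Z^1,\dots,Z^j,SY-YS,Z^{j+1},\dots,Z^\ell)$; $f_\ell(Z^1,\dots,Z^{\ell-1},Z^\ell S)-f_\ell(Z^1,\dots,Z^\ell)S=f_{\ell+1}(Z^1,\dots,Z^\ell,SY-YS)$. Then the function $f$ defined on $\mathrm{Nilp}(\mathcal M,Y)$ by $f(X)=\sum_{\ell=0}^\infty(X-\bigoplus_{\alpha=1}^mY)^{\odot_s\ell}f_\ell$ for $X\in\mathrm{Nilp}(\mathcal M,Y)\cap\mathcal M^{sm\times sm}$ (a sum with finitely many nonzero terms) is a nc function on $\mathrm{Nilp}(\mathcal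 M,Y)$ with values in $\mathcal N_{\mathrm{nc}}$.
   Context: $\mathcal M_{\mathrm{nc}}=\coprod_{n\ge1}\mathcal M^{n\times n}$; matrices over $\mathcal R$ act on matrices over $\mathcal M,\mathcal N$ by matrix multiplication; $X\oplus Y=\begin{bmatrix}X&0\\0&Y\end{bmatrix}$. A nc function on a set $\Omega$ closed under direct sums (with $\Omega_n=\Omega\cap\mathcal M^{n\times n}$) is a map $f$ with $f(\Omega_n)\subseteq\mathcal N^{n\times n}$, $f(X\oplus X')=f(X)\oplus f(X')$, and $f(SXS^{-1})=Sf(X)S^{-1}$ whenever $S\in\mathcal R^{n\times n}$ invertible and $X,SXS^{-1}\in\Omega_n$. For $W\in\mathcal M^{sm\times sm}$ viewed as an $m\times m$ matrix $[W_{ij}]$ of blocks in $\mathcal M^{s\times s}$, $W^{\odot_s\ell}$ is the $m\times m$ matrix over $(\mathcal M^{s\times s})^{\otimes\ell}$ with $(i,k)$ entry $\sum_{j_1,\dots,j_{\ell-1}}W_{ij_1}\otimes\cdots\otimes W_{j_{\ell-1}k}$; $W^{\odot_s\ell}f_\ell\in\mathcal N^{sm\times sm}$ applies $f_\ell$ (as a linear map on the tensor power) entrywise, and $W^{\odot_s0}f_0=\bigoplus_{\alpha=1}^mf_0$. $\mathrm{Nilp}(\mathcal M,Y)=\coprod_m\{X\in\mathcal M^{sm\times sm}:(X-\bigoplus_{\alpha=1}^mY)^{\odot_s\ell}=0\text{ for some }\ell\}$. *)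

(* Defs.v *)
From HB Require Import structures.
From mathcomp Require Import all_boot all_order all_algebra zify.
Set Implicit Arguments. Unset Strict Implicit. Unset Printing Implicit Defensive.
Import Order.TTheory GRing.Theory.
Local Open Scope ring_scope.

Definition scm (R : comNzRingType) (V : lmodType R) p q (c : R) (x : 'M[V]_(p, q))
  : 'M[V]_(p, q) := map_mx ( *:%R c) x.

Section NC.
Variables (R : comNzRingType) (M : lmodType R).

Definition lmul p q r (S : 'M[R]_(p, q)) (X : 'M[M]_(q, r)) : 'M[M]_(p, r) :=
  \matrix_(i, k) \sum_(j < q) S i j *: X j k.
Definition rmul p q r (X : 'M[M]_(p, q)) (S : 'M[R]_(q, r)) : 'M[M]_(p, r) :=
  \matrix_(i, k) \sum_(j < q) S j k *: X i j.

Definition dsum n n' (X : 'M[M]_n) (X' : 'M[M]_n') : 'M[M]_(n + n') :=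
  block_mx X 0 0 X'.

Definition commS s (S : 'M[R]_s) (Y : 'M[M]_s) : 'M[M]_s := lmul S Y - rmul Y S.

Lemma bidx_proof s m n (h : (s * m)%N = n) (i : 'I_m) (a : 'I_s) :
  (i * s + a < n)%N.
Proof. rewrite -h; have := ltn_ord i; have := ltn_ord a; nia. Qed.
Definition bidx s m n (h : (s * m)%N = n) (i : 'I_m) (a : 'I_s) : 'I_n :=
  Ordinal (bidx_proof h i a).

Definition blk s m n (h : (s * m)%N = n) (W : 'M[M]_n) (i j : 'I_m) : 'M[M]_s :=
  \matrix_(a, b) W (bidx h i a) (bidx h j b).

Definition bdiag s m n (h : (s * m)%N = n) (Y : 'M[M]_s) : 'M[M]_n :=
  \matrix_(p, q) \sum_(i < m) \sum_(a < s) \sum_(b < s)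
     (if (bidx h i a == p) && (bidx h i b == q) then Y a b else 0).

Definition multilinear_on (P : lmodType R) s (l : nat) (g : seq 'M[M]_s -> P) :=
  forall (a b : seq 'M[M]_s) (c : R) (x y : 'M[M]_s),
    (size a + size b).+1 = l ->
    g (a ++ (scm c x + y) :: b) = c *: g (a ++ x :: b) + g (a ++ y :: b).


Definition path_word s m n (h : (s * m)%N = n) (W : 'M[M]_n) l
    (p : {ffun 'I_l.+1 -> 'I_m}) : seq 'M[M]_s :=
  [seq blk h W (p (widen_ord (leqnSn l) j)) (p (lift ord0 j)) | j <- enum 'I_l].

(* (i,k) entry of W^{(.)_s l} g, for g an l-linear map into P *)
Definition odot_entry (P : nmodType) s m n (h : (s * m)%N = n) (W : 'M[M]_n)
    l (g : seq 'M[M]_s -> P) (i k : 'I_m) : P :=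
  \sum_(p : {ffun 'I_l.+1 -> 'I_m} | (p ord0 == i) && (p ord_max == k))
     g (path_word h W p).

(* W^{(.)_s l} = 0 as an m x m matrix over the tensor power (M^{s x s})^{(x) l},
   expressed via the universal property of the tensor product: every l-linear
   map kills all entries. *)
Definition odot_zero s m n (h : (s * m)%N = n) (W : 'M[M]_n) (l : nat) : Prop :=
  forall (P : lmodType R) (g : seq 'M[M]_s -> P), multilinear_on l g ->
    forall i k : 'I_m, odot_entry h W l g i k = 0.

Definition nilpot s m n (h : (s * m)%N = n) (Y : 'M[M]_s) (X : 'M[M]_n) : Prop :=
  exists l, odot_zero h (X - bdiag h Y) l.

Definition NilpD s (Y : 'M[M]_s) (n : nat) (X : 'M[M]_n) : Prop :=
  exists m (h : (s * m)%N = n), (0 < m)%N /\ nilpot h Y X.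

End NC.

Section NC2.
Variables (R : comNzRingType) (M N : lmodType R).

(* a family (f_l)_l of l-linear maps (M^{s x s})^l -> N^{s x s}, encoded as
   one map F on lists: f_l is the restriction of F to lists of length l *)
Definition multilinear s (F : seq 'M[M]_s -> 'M[N]_s) :=
  forall (a b : seq 'M[M]_s) (c : R) (x y : 'M[M]_s),
    F (a ++ (scm c x + y) :: b) = scm c (F (a ++ x :: b)) + F (a ++ y :: b).

Definition unblk s m n (h : (s * m)%N = n) (B : 'I_m -> 'I_m -> 'M[N]_s) : 'M[N]_n :=
  \matrix_(p, q) \sum_(i < m) \sum_(j < m) \sum_(a < s) \sum_(b < s)
     (if (bidx h i a == p) && (bidx h j b == q) then B i j a b else 0).

Definition psum s m n (h : (s * m)%N = n) (Y : 'M[M]_s)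
    (F : seq 'M[M]_s -> 'M[N]_s) (L : nat) (X : 'M[M]_n) : 'M[N]_n :=
  unblk h (fun i k => \sum_(l < L) odot_entry h (X - bdiag h Y) l F i k).

Definition nc_fun (Dom : forall n, 'M[M]_n -> Prop)
    (f : forall n, 'M[M]_n -> 'M[N]_n) : Prop :=
  [/\ (forall n n' (X : 'M[M]_n) (X' : 'M[M]_n'),
         Dom n X -> Dom n' X' -> Dom (n + n')%N (dsum X X')),
      (forall n n' (X : 'M[M]_n) (X' : 'M[M]_n'),
         Dom n X -> Dom n' X' ->
         f (n + n')%N (dsum X X') = dsum (f n X) (f n' X')) &
      (forall n (X : 'M[M]_n) (S T : 'M[R]_n),
         S *m T = 1%:M -> T *m S = 1%:M ->
         Dom n X -> Dom n (rmul (lmul S X) T) ->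
         f n (rmul (lmul S X) T) = rmul (lmul S (f n X)) T)].

End NC2.

(* Main.v *)
Require Import Defs.
From HB Require Import structures.
From mathcomp Require Import all_boot all_order all_algebra.
From mathcomp Require Import zify.
From Stdlib Require Import FunctionalExtensionality ClassicalEpsilon.
Import GRing.Theory.
Local Open Scope ring_scope.
Set Implicit Arguments. Unset Strict Implicit. Unset Printing Implicit Defensive.


Lemma sumrD' (V : nmodType) (I : Type) (r : seq I) (P : pred I) (F1 F2 : I -> V) :
  \sum_(i <- r | P i) (F1 i + F2 i) = \sum_(i <- r | P i) F1 i + \sum_(i <- r | P i) F2 i.
Proof. exact: big_split. Qed.

Fixpoint TT (A : Type) (P : zmodType) (m : nat) (Bs : seq ('I_m -> 'I_m -> A))
  (g : seq A -> P) (i k : 'I_m) {struct Bs} : P :=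
  match Bs with
  | [::] => if i == k then g [::] else 0
  | B :: Bs' => \sum_(j < m) TT Bs' (fun w => g (B i j :: w)) j k
  end.

Section TTlemmas.
Variables (A : Type) (m : nat).
Implicit Types (Bs As : seq ('I_m -> 'I_m -> A)).

Lemma TT_ext_len (P : zmodType) Bs (g1 g2 : seq A -> P) :
  (forall w, size w = size Bs -> g1 w = g2 w) -> forall i k, TT Bs g1 i k = TT Bs g2 i k.
Proof.
elim: Bs g1 g2 => [|B Bs IH] g1 g2 H i k /=; first by rewrite H.
by apply: eq_bigr => j _; apply: IH => w hw; apply: H; rewrite /= hw.
Qed.

Lemma TT_ext (P : zmodType) Bs (g1 g2 : seq A -> P) :
  (forall w, g1 w = g2 w) -> forall i k, TT Bs g1 i k = TT Bs g2 i k.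
Proof. by move=> H; apply: TT_ext_len => w _; apply: H. Qed.

Lemma TT_morph (P Q : zmodType) (phi : P -> Q) Bs (g : seq A -> P) i k :
  phi 0 = 0 -> {morph phi : x y / x + y} ->
  TT Bs (fun w => phi (g w)) i k = phi (TT Bs g i k).
Proof.
move=> h0 hadd; elim: Bs g i k => [|B Bs IH] g i k /=.
  by case: (i == k).
rewrite (big_morph phi hadd h0); apply: eq_bigr => j _.
exact: (IH (fun w => g (B i j :: w))).
Qed.

Lemma TT_add (P : zmodType) Bs (g1 g2 : seq A -> P) i k :
  TT Bs (fun w => g1 w + g2 w) i k = TT Bs g1 i k + TT Bs g2 i k.
Proof.
elim: Bs g1 g2 i k => [|B Bs IH] g1 g2 i k /=.
  by case: (i == k); rewrite ?addr0.
rewrite -sumrD'; apply: eq_bigr => j _.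
exact: (IH (fun w => g1 (B i j :: w)) (fun w => g2 (B i j :: w))).
Qed.

Lemma TT_zero (P : zmodType) Bs (g : seq A -> P) i k :
  (forall w, size w = size Bs -> g w = 0) -> TT Bs g i k = 0.
Proof.
move=> H; rewrite (TT_ext_len (g2 := fun _ => 0)) //.
elim: Bs i k {H} => [|B Bs IH] i k /=; first by case: (i == k).
by rewrite big1.
Qed.

Lemma TT_opp (P : zmodType) Bs (g : seq A -> P) i k :
  TT Bs (fun w => - g w) i k = - TT Bs g i k.
Proof. by rewrite (TT_morph (phi := fun x : P => - x)) ?oppr0 // => x y; rewrite opprD. Qed.

Lemma TT_sub (P : zmodType) Bs (g1 g2 : seq A -> P) i k :
  TT Bs (fun w => g1 w - g2 w) i k = TT Bs g1 i k - TT Bs g2 i k.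
Proof. by rewrite TT_add TT_opp. Qed.

Lemma TT_sum (P : zmodType) (I : Type) (r : seq I) Bs (G : I -> seq A -> P) i k :
  TT Bs (fun w => \sum_(x <- r) G x w) i k = \sum_(x <- r) TT Bs (G x) i k.
Proof.
elim: r => [|x r IH].
  rewrite big_nil; apply: TT_zero => w _; by rewrite big_nil.
rewrite big_cons -IH -TT_add; apply: TT_ext => w; by rewrite big_cons.
Qed.

Lemma TT_cat (P : zmodType) As Bs (g : seq A -> P) i k :
  TT (As ++ Bs) g i k = \sum_(j < m) TT As (fun w => TT Bs (fun w' => g (w ++ w')) j k) i j.
Proof.
elim: As g i k => [|A0 As IH] g i k /=.
  rewrite (bigD1 i) //= eqxx big1 ?addr0 // => j; rewrite eq_sym => /negbTE -> //.
rewrite exchange_big /=; apply: eq_bigr => j1 _; rewrite IH.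
by apply: eq_bigr.
Qed.

Lemma TT1 (P : zmodType) (C : 'I_m -> 'I_m -> A) (g : seq A -> P) j k :
  TT [:: C] g j k = g [:: C j k].
Proof.
rewrite /= (bigD1 k) //= eqxx big1 ?addr0 // => t /negbTE -> //.
Qed.

Lemma TT2 (P : zmodType) (C1 C2 : 'I_m -> 'I_m -> A) (g : seq A -> P) j k :
  TT [:: C1; C2] g j k = \sum_(v < m) g [:: C1 j v; C2 v k].
Proof.
have -> : TT [:: C1; C2] g j k = \sum_(v < m) TT [:: C2] (fun w => g (C1 j v :: w)) v k by [].
by apply: eq_bigr => v _; rewrite TT1.
Qed.

End TTlemmas.

Section SLevel.
Variables (R : comNzRingType) (V : lmodType R).
Lemma lmulD p q r (S : 'M[R]_(p, q)) (x y : 'M[V]_(q, r)) :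
  lmul S (x + y) = lmul S x + lmul S y.
Proof. by apply/matrixP => i k; rewrite !mxE -big_split; apply: eq_bigr => j _; rewrite mxE scalerDr. Qed.
Lemma lmul0 p q r (S : 'M[R]_(p, q)) : lmul S (0 : 'M[V]_(q, r)) = 0.
Proof. by apply/matrixP => i k; rewrite !mxE big1 // => j _; rewrite mxE scaler0. Qed.
Lemma lmulN p q r (S : 'M[R]_(p, q)) (x : 'M[V]_(q, r)) : lmul S (- x) = - lmul S x.
Proof. by apply/matrixP => i k; rewrite !mxE -sumrN; apply: eq_bigr => j _; rewrite mxE scalerN. Qed.
Lemma lmulB p q r (S : 'M[R]_(p, q)) (x y : 'M[V]_(q, r)) :
  lmul S (x - y) = lmul S x - lmul S y.
Proof. by rewrite lmulD lmulN. Qed.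
Lemma lmul_sum p q r (S : 'M[R]_(p, q)) (I : Type) (rr : seq I) (G : I -> 'M[V]_(q, r)) :
  lmul S (\sum_(x <- rr) G x) = \sum_(x <- rr) lmul S (G x).
Proof. by apply: (big_morph (lmul S)); [exact: lmulD | exact: lmul0]. Qed.
Lemma rmulD p q r (x y : 'M[V]_(p, q)) (S : 'M[R]_(q, r)) :
  rmul (x + y) S = rmul x S + rmul y S.
Proof. by apply/matrixP => i k; rewrite !mxE -big_split; apply: eq_bigr => j _; rewrite mxE scalerDr. Qed.
Lemma rmul0 p q r (S : 'M[R]_(q, r)) : rmul (0 : 'M[V]_(p, q)) S = 0.
Proof. by apply/matrixP => i k; rewrite !mxE big1 // => j _; rewrite mxE scaler0. Qed.
Lemma rmulN p q r (x : 'M[V]_(p, q)) (S : 'M[R]_(q, r)) : rmul (- x) S = - rmul x S.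
Proof. by apply/matrixP => i k; rewrite !mxE -sumrN; apply: eq_bigr => j _; rewrite mxE scalerN. Qed.
Lemma rmulB p q r (x y : 'M[V]_(p, q)) (S : 'M[R]_(q, r)) :
  rmul (x - y) S = rmul x S - rmul y S.
Proof. by rewrite rmulD rmulN. Qed.
Lemma rmul_sum p q r (S : 'M[R]_(q, r)) (I : Type) (rr : seq I) (G : I -> 'M[V]_(p, q)) :
  rmul (\sum_(x <- rr) G x) S = \sum_(x <- rr) rmul (G x) S.
Proof. by apply: (big_morph (fun x => rmul x S)); [move=> x y; exact: rmulD | exact: rmul0]. Qed.
Lemma rmul_rmul p q r t (x : 'M[V]_(p, q)) (S : 'M[R]_(q, r)) (T : 'M[R]_(r, t)) :
  rmul (rmul x S) T = rmul x (S *m T).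
Proof.
apply/matrixP => i k; rewrite !mxE.
under eq_bigr => j _ do rewrite mxE scaler_sumr.
rewrite exchange_big /=; apply: eq_bigr => j _; rewrite mxE scaler_suml.
by apply: eq_bigr => l _; rewrite scalerA mulrC.
Qed.
Lemma rmul1 p q (x : 'M[V]_(p, q)) : rmul x 1%:M = x.
Proof.
apply/matrixP => i k; rewrite !mxE (bigD1 k) //= big1 ?addr0 => [|j /negbTE ne].
  by rewrite mxE eqxx scale1r.
by rewrite mxE ne scale0r.
Qed.
End SLevel.


Section Paths.
Variables (A : Type) (m : nat) (Bf : 'I_m -> 'I_m -> A).

Definition pw l (p : {ffun 'I_l.+1 -> 'I_m}) : seq A :=
  [seq Bf (p (widen_ord (leqnSn l) j)) (p (lift ord0 j)) | j <- enum 'I_l].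

Definition consf l (x : 'I_m) (q : {ffun 'I_l.+1 -> 'I_m}) : {ffun 'I_l.+2 -> 'I_m} :=
  [ffun t => if unlift ord0 t is Some t' then q t' else x].
Definition tailf l (p : {ffun 'I_l.+2 -> 'I_m}) : 'I_m * {ffun 'I_l.+1 -> 'I_m} :=
  (p ord0, [ffun t => p (lift ord0 t)]).

Lemma consf0 l x (q : {ffun 'I_l.+1 -> 'I_m}) : consf x q ord0 = x.
Proof. by rewrite /consf ffunE unlift_none. Qed.
Lemma consfS l x (q : {ffun 'I_l.+1 -> 'I_m}) t : consf x q (lift ord0 t) = q t.
Proof. by rewrite /consf ffunE liftK. Qed.

Lemma pw_cons l x (q : {ffun 'I_l.+1 -> 'I_m}) : pw (consf x q) = Bf x (q ord0) :: pw q.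
Proof.
rewrite /pw enum_ordSl /=.
have -> : widen_ord (leqnSn l.+1) (@ord0 l) = ord0 by apply: val_inj.
rewrite consf0 consfS; congr (_ :: _).
rewrite -map_comp; apply: eq_map => j /=.
have -> : widen_ord (leqnSn l.+1) (lift ord0 j) = lift ord0 (widen_ord (leqnSn l) j).
  by apply: val_inj.
by rewrite !consfS.
Qed.

Lemma path_sum (P : zmodType) l (g : seq A -> P) i k :
  \sum_(p : {ffun 'I_l.+1 -> 'I_m} | (p ord0 == i) && (p ord_max == k)) g (pw p)
  = TT (nseq l Bf) g i k.
Proof.
elim: l g i => [|l IH] g i /=.
  have -> : (ord_max : 'I_1) = ord0 by apply: val_inj.
  case: eqP => [<-|ne].
    rewrite (big_pred1 [ffun => i]); first by rewrite /pw /= enum_ord0.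
    move=> p /=; rewrite andbb; apply/eqP/eqP => [<-|->]; last by rewrite ffunE.
    by apply/ffunP => t; rewrite ffunE (ord1 t).
  rewrite big_pred0 // => p; apply/negP => /andP [/eqP -> /eqP]; exact: ne.
rewrite (reindex (fun xq : 'I_m * {ffun 'I_l.+1 -> 'I_m} => consf xq.1 xq.2)) /=; last first.
  apply: onW_bij; exists (@tailf l) => [[x q]|p] /=.
    rewrite /tailf consf0; congr (_, _); apply/ffunP => t; by rewrite ffunE consfS.
  apply/ffunP => t; rewrite /consf ffunE.
  by case: unliftP => [t'|] ->; rewrite ?ffunE.
have hmax : (ord_max : 'I_l.+2) = lift ord0 (ord_max : 'I_l.+1) by apply: val_inj.
rewrite (eq_bigl (fun xq : _ * {ffun _ -> _} => (xq.1 == i) && (xq.2 ord_max == k))); last first.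
  by move=> [x q] /=; rewrite consf0 hmax consfS.
rewrite -(pair_big_dep (fun x : 'I_m => x == i)
   (fun _ (q : {ffun 'I_l.+1 -> 'I_m}) => q ord_max == k)
   (fun x q => g (pw (consf x q)))) /=.
rewrite big_pred1_eq.
rewrite (partition_big (fun q : {ffun 'I_l.+1 -> 'I_m} => q ord0) predT) //=.
apply: eq_bigr => j _; rewrite -IH.
apply: eq_big => [q|q /andP [_ /eqP <-]]; first by rewrite andbC.
by rewrite pw_cons.
Qed.

End Paths.

Lemma sum_only (V : nmodType) (I : finType) (i0 : I) (F : I -> V) :
  (forall i, i != i0 -> F i = 0) -> \sum_i F i = F i0.
Proof. by move=> H; rewrite (bigD1 i0) //= big1 ?addr0. Qed.

Section Blocks.
Variables (s m n : nat) (h : (s * m)%N = n).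

Lemma bidx_eq (i j : 'I_m) (a b : 'I_s) :
  (bidx h i a == bidx h j b) = (i == j) && (a == b).
Proof.
apply/eqP/andP => [/(congr1 val) /= E|[/eqP -> /eqP ->] //].
have Ha := ltn_ord a; have Hb := ltn_ord b.
have hab : (a : nat) = b.
  have := congr1 (modn^~ s) E; rewrite !modnMDl !modn_small //.
rewrite hab in E; have E' : (i * s = j * s)%N by lia.
have sp : (0 < s)%N by lia.
by split; apply/eqP; apply: val_inj; [apply/eqP; rewrite -(eqn_pmul2r sp) E' | ].
Qed.

Lemma div_lt (p : 'I_n) : (p %/ s < m)%N.
Proof.
have Hp : (p < s * m)%N by rewrite h.
have sp : (0 < s)%N by case: s Hp => //; rewrite mul0n.
by rewrite ltn_divLR // mulnC.
Qed.
Lemma mod_lt (p : 'I_n) : (p %% s < s)%N.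
Proof.
have Hp : (p < s * m)%N by rewrite h.
have sp : (0 < s)%N by case: s Hp => //; rewrite mul0n.
by rewrite ltn_pmod.
Qed.
Definition unbidx (p : 'I_n) : 'I_m * 'I_s := (Ordinal (div_lt p), Ordinal (mod_lt p)).

Lemma bidxK (p : 'I_n) : bidx h (unbidx p).1 (unbidx p).2 = p.
Proof. by apply: val_inj => /=; rewrite -divn_eq. Qed.
Lemma unbidxK (i : 'I_m) (a : 'I_s) : unbidx (bidx h i a) = (i, a).
Proof.
case E: (unbidx (bidx h i a)) => [i' a'].
by have := bidxK (bidx h i a); rewrite E /= => /eqP; rewrite bidx_eq => /andP [/eqP -> /eqP ->].
Qed.

Lemma sum_bidx (V : nmodType) (G : 'I_n -> V) :
  \sum_(p < n) G p = \sum_(i < m) \sum_(a < s) G (bidx h i a).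
Proof.
rewrite pair_big /= (reindex (fun ia : 'I_m * 'I_s => bidx h ia.1 ia.2)) //.
apply: onW_bij; exists unbidx => [[i a]|p]; [exact: unbidxK | exact: bidxK].
Qed.

Definition blkG (T : Type) (W : 'M[T]_n) (i j : 'I_m) : 'M[T]_s :=
  \matrix_(a, b) W (bidx h i a) (bidx h j b).

Lemma eq_blk (T : Type) (W1 W2 : 'M[T]_n) :
  (forall i j, blkG W1 i j = blkG W2 i j) -> W1 = W2.
Proof.
move=> H; apply/matrixP => p q; rewrite -(bidxK p) -(bidxK q).
have := congr1 (fun M : 'M[T]_s => M (unbidx p).2 (unbidx q).2) (H (unbidx p).1 (unbidx q).1).
by rewrite /= !mxE.
Qed.

Lemma blk_unblk (R : comNzRingType) (N : lmodType R) (B : 'I_m -> 'I_m -> 'M[N]_s) i j :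
  blkG (unblk h B) i j = B i j.
Proof.
apply/matrixP => a0 b0; rewrite !mxE.
rewrite (@sum_only _ _ i) => [|i' ne]; last first.
  apply: big1 => j' _; apply: big1 => a _; apply: big1 => b _.
  by rewrite bidx_eq (negbTE ne).
rewrite (@sum_only _ _ j) => [|j' ne]; last first.
  apply: big1 => a _; apply: big1 => b _.
  by rewrite !bidx_eq (negbTE ne) andbF.
rewrite (@sum_only _ _ a0) => [|a ne]; last first.
  apply: big1 => b _.
  by rewrite !bidx_eq eqxx (negbTE ne).
rewrite (@sum_only _ _ b0) => [|b ne]; last first.
  by rewrite !bidx_eq !eqxx (negbTE ne).
by rewrite !bidx_eq !eqxx.
Qed.

Lemma blk_bdiag (R : comNzRingType) (M : lmodType R) (Y : 'M[M]_s) i j :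
  blkG (bdiag h Y) i j = if i == j then Y else 0.
Proof.
apply/matrixP => a0 b0; rewrite !mxE.
case: eqP => [<-|ne].
  rewrite (@sum_only _ _ i) => [|i' ne]; last first.
    apply: big1 => a _; apply: big1 => b _.
    by rewrite bidx_eq (negbTE ne).
  rewrite (@sum_only _ _ a0) => [|a ne]; last first.
    apply: big1 => b _. by rewrite !bidx_eq eqxx (negbTE ne).
  rewrite (@sum_only _ _ b0) => [|b ne]; last first.
    by rewrite !bidx_eq !eqxx (negbTE ne) andbF.
  by rewrite !bidx_eq !eqxx.
rewrite mxE; apply: big1 => t _; apply: big1 => a _; apply: big1 => b _.
have ne' : (i == j) = false by apply/eqP.
by rewrite !bidx_eq; case: (t =P i) => [->|_] /=; rewrite ?ne' ?andbF.
Qed.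

Lemma blk_lmul (R : comNzRingType) (M : lmodType R) (S : 'M[R]_n) (X : 'M[M]_n) i k :
  blkG (lmul S X) i k = \sum_(j < m) lmul (blkG S i j) (blkG X j k).
Proof.
apply/matrixP => a b; rewrite !mxE summxE sum_bidx; apply: eq_bigr => j _.
by rewrite mxE; apply: eq_bigr => c _; rewrite !mxE.
Qed.

Lemma blk_rmul (R : comNzRingType) (M : lmodType R) (X : 'M[M]_n) (S : 'M[R]_n) i k :
  blkG (rmul X S) i k = \sum_(j < m) rmul (blkG X i j) (blkG S j k).
Proof.
apply/matrixP => a b; rewrite !mxE summxE sum_bidx; apply: eq_bigr => j _.
by rewrite mxE; apply: eq_bigr => c _; rewrite !mxE.
Qed.

Lemma blkB (V : zmodType) (X1 X2 : 'M[V]_n) i k :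
  blkG (X1 - X2) i k = blkG X1 i k - blkG X2 i k.
Proof. by apply/matrixP => a b; rewrite !mxE. Qed.

End Blocks.

Lemma scm1 (R : comNzRingType) (V : lmodType R) p q (x : 'M[V]_(p, q)) : scm 1 x = x.
Proof. by apply/matrixP => i j; rewrite !mxE scale1r. Qed.

Section Bdiag.
Variables (A : Type) (P : zmodType) (m m' : nat) (B : 'I_(m + m') -> 'I_(m + m') -> A)
  (B1 : 'I_m -> 'I_m -> A) (B2 : 'I_m' -> 'I_m' -> A) (z : A).
Hypotheses (Hll : forall i j, B (lshift m' i) (lshift m' j) = B1 i j)
  (Hlr : forall i j, B (lshift m' i) (rshift m j) = z)
  (Hrl : forall i j, B (rshift m i) (lshift m' j) = z)
  (Hrr : forall i j, B (rshift m i) (rshift m j) = B2 i j).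

Lemma TT_bdiag l (g : seq A -> P) :
  (forall w1 w2, (size w1 + size w2).+1 = l -> g (w1 ++ z :: w2) = 0) ->
  [/\ (forall i k, TT (nseq l B) g (lshift m' i) (lshift m' k) = TT (nseq l B1) g i k),
      (forall i k, TT (nseq l B) g (lshift m' i) (rshift m k) = 0),
      (forall i k, TT (nseq l B) g (rshift m i) (lshift m' k) = 0) &
      (forall i k, TT (nseq l B) g (rshift m i) (rshift m k) = TT (nseq l B2) g i k)].
Proof.
elim: l g => [|l IH] g hz.
  split=> i k /=.
  - by rewrite (inj_eq (@lshift_inj _ _)).
  - by rewrite eq_lrshift.
  - by rewrite eq_rlshift.
  - by rewrite (inj_eq (@rshift_inj _ _)).
have hz' : forall x, (forall w1 w2, (size w1 + size w2).+1 = l -> g (x :: w1 ++ z :: w2) = 0).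
  by move=> x w1 w2 hs; apply: (hz (x :: w1)); rewrite /= addSn hs.
have hzz : forall w, size w = l -> g (z :: w) = 0.
  by move=> w hs; apply: (hz [::]); rewrite hs.
have Z0 : forall y j, TT (nseq l B) (fun w => g (z :: w)) j y = 0.
  by move=> y j; apply: TT_zero => w; rewrite size_nseq; exact: hzz.
split=> i k /=; rewrite big_split_ord /=.
- rewrite [X in _ + X]big1 ?addr0 => [|j _]; last by rewrite Hlr Z0.
  apply: eq_bigr => j _; rewrite Hll.
  by case: (IH (fun w => g (B1 i j :: w)) (hz' (B1 i j))).
- rewrite [X in _ + X]big1 ?addr0 => [|j _]; last by rewrite Hlr Z0.
  apply: big1 => j _; rewrite Hll.
  by case: (IH (fun w => g (B1 i j :: w)) (hz' (B1 i j))).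
- rewrite big1 ?add0r => [|j _]; last by rewrite Hrl Z0.
  apply: big1 => j _; rewrite Hrr.
  by case: (IH (fun w => g (B2 i j :: w)) (hz' (B2 i j))).
- rewrite big1 ?add0r => [|j _]; last by rewrite Hrl Z0.
  apply: eq_bigr => j _; rewrite Hrr.
  by case: (IH (fun w => g (B2 i j :: w)) (hz' (B2 i j))).
Qed.
End Bdiag.

Section Main.
Variables (R : comNzRingType) (M N : lmodType R) (s : nat)
  (Y : 'M[M]_s) (F : seq 'M[M]_s -> 'M[N]_s)
  (Flin : multilinear F)
  (H0 : forall S : 'M[R]_s,
      lmul S (F [::]) - rmul (F [::]) S = F [:: commS S Y])
  (H1 : forall (S : 'M[R]_s) (Z : 'M[M]_s) (Zs : seq 'M[M]_s),
      lmul S (F (Z :: Zs)) - F (lmul S Z :: Zs) = F (commS S Y :: Z :: Zs))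
  (H2 : forall (S : 'M[R]_s) (a b : seq 'M[M]_s) (Z Z' : 'M[M]_s),
      F (a ++ rmul Z S :: Z' :: b) - F (a ++ Z :: lmul S Z' :: b)
      = F (a ++ Z :: commS S Y :: Z' :: b))
  (H3 : forall (S : 'M[R]_s) (a : seq 'M[M]_s) (Z : 'M[M]_s),
      F (rcons a (rmul Z S)) - rmul (F (rcons a Z)) S
      = F (a ++ [:: Z; commS S Y])).

Local Notation A := 'M[M]_s.

Lemma F_add a b (x y : A) : F (a ++ (x + y) :: b) = F (a ++ x :: b) + F (a ++ y :: b).
Proof. by have := Flin a b 1 x y; rewrite !scm1. Qed.
Lemma F_zero a b : F (a ++ 0 :: b) = 0.
Proof.
have E := F_add a b 0 0; rewrite addr0 in E.
by apply: (addrI (F (a ++ 0 :: b))); rewrite addr0 -E.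
Qed.
Lemma F_sum a b (I : Type) (r : seq I) (G : I -> A) :
  F (a ++ (\sum_(x <- r) G x) :: b) = \sum_(x <- r) F (a ++ G x :: b).
Proof. by apply: (big_morph (fun x => F (a ++ x :: b))); [exact: F_add | exact: F_zero]. Qed.
Lemma F_sub a b (x y : A) : F (a ++ (x - y) :: b) = F (a ++ x :: b) - F (a ++ y :: b).
Proof. by apply: (addIr (F (a ++ y :: b))); rewrite -F_add !subrK. Qed.

Lemma H1' (S : 'M[R]_s) (Z : A) Zs :
  lmul S (F (Z :: Zs)) = F (lmul S Z :: Zs) + F (commS S Y :: Z :: Zs).
Proof. by rewrite -H1 subrKC. Qed.
Lemma H2' (S : 'M[R]_s) a b (Z Z' : A) :
  F (a ++ rmul Z S :: Z' :: b) = F (a ++ Z :: lmul S Z' :: b) + F (a ++ Z :: commS S Y :: Z' :: b).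
Proof. by rewrite -H2 subrKC. Qed.
Lemma H3' (S : 'M[R]_s) a (Z : A) :
  F (rcons a (rmul Z S)) = rmul (F (rcons a Z)) S + F (a ++ [:: Z; commS S Y]).
Proof. by rewrite -H3 subrKC. Qed.
Lemma H0' (S : 'M[R]_s) : lmul S (F [::]) = rmul (F [::]) S + F [:: commS S Y].
Proof. by rewrite -H0 subrKC. Qed.

Section WithM.
Variable m : nat.
Local Notation bf := ('I_m -> 'I_m -> A).

Definition bl_lmul (V : lmodType R) (Sb : 'I_m -> 'I_m -> 'M[R]_s)
  (B : 'I_m -> 'I_m -> 'M[V]_s) (i k : 'I_m) : 'M[V]_s :=
  \sum_(j < m) lmul (Sb i j) (B j k).
Definition bl_rmul (V : lmodType R) (B : 'I_m -> 'I_m -> 'M[V]_s)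
  (Sb : 'I_m -> 'I_m -> 'M[R]_s) (i k : 'I_m) : 'M[V]_s :=
  \sum_(j < m) rmul (B i j) (Sb j k).

Section Chain.
Variable Sb : 'I_m -> 'I_m -> 'M[R]_s.
Definition Db (i j : 'I_m) : A := commS (Sb i j) Y.
Definition T (Bs : seq bf) (i k : 'I_m) : 'M[N]_s := TT Bs F i k.

Lemma H1blk (B : bf) Bs i k :
  bl_lmul Sb (T (B :: Bs)) i k = T (bl_lmul Sb B :: Bs) i k + T (Db :: B :: Bs) i k.
Proof.
have E : forall j t, lmul (Sb i j) (TT Bs (fun w => F (B j t :: w)) t k) =
   TT Bs (fun w => F (lmul (Sb i j) (B j t) :: w)) t k +
   TT Bs (fun w => F (Db i j :: B j t :: w)) t k.
  move=> j t; rewrite -(TT_morph (phi := lmul (Sb i j))); last 2 first.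
  - exact: lmul0.
  - by move=> x y; exact: lmulD.
  by rewrite -TT_add; apply: TT_ext => w; exact: H1'.
rewrite /bl_lmul /T /=.
rewrite (eq_bigr (fun j => \sum_(t < m) TT Bs (fun w => F (lmul (Sb i j) (B j t) :: w)) t k +
   \sum_(t < m) TT Bs (fun w => F (Db i j :: B j t :: w)) t k)); last first.
  by move=> j _; rewrite lmul_sum -sumrD'; apply: eq_bigr => t _; exact: E.
rewrite sumrD' /=; congr (_ + _).
rewrite exchange_big; apply: eq_bigr => t _.
rewrite -TT_sum; apply: TT_ext => w.
by rewrite (F_sum [::]).
Qed.



Lemma H0blk i k :
  bl_lmul Sb (T [::]) i k = bl_rmul (T [::]) Sb i k + T [:: Db] i k.
Proof.
rewrite /bl_lmul /bl_rmul /T TT1 /=.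
rewrite (@sum_only _ _ k) => [|j ne]; last by rewrite (negbTE ne) lmul0.
rewrite (@sum_only _ _ i) => [|j ne]; last by rewrite eq_sym (negbTE ne) rmul0.
by rewrite !eqxx H0'.
Qed.

Lemma H2loc (Z Z' : bf) Bs w j k :
  TT (bl_rmul Z Sb :: Z' :: Bs) (fun w' => F (w ++ w')) j k =
  TT (Z :: bl_lmul Sb Z' :: Bs) (fun w' => F (w ++ w')) j k +
  TT (Z :: Db :: Z' :: Bs) (fun w' => F (w ++ w')) j k.
Proof.
rewrite /=.
have E : forall t u, TT Bs (fun w0 => F (w ++ bl_rmul Z Sb j t :: Z' t u :: w0)) u k =
  \sum_(v < m) (TT Bs (fun w0 => F (w ++ Z j v :: lmul (Sb v t) (Z' t u) :: w0)) u k +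
                TT Bs (fun w0 => F (w ++ Z j v :: Db v t :: Z' t u :: w0)) u k).
  move=> t u; under eq_bigr => v _ do rewrite -TT_add.
  rewrite -TT_sum; apply: TT_ext => w0.
  rewrite /bl_rmul F_sum; apply: eq_bigr => v _; exact: H2'.
under eq_bigr => t _ do under eq_bigr => u _ do rewrite E sumrD'.
under eq_bigr => t _ do rewrite sumrD'.
rewrite sumrD' /=; congr (_ + _).
  under eq_bigr => t _ do rewrite exchange_big.
  rewrite exchange_big /=.
  apply: eq_bigr => v _; rewrite exchange_big /=; apply: eq_bigr => u _.
  rewrite -TT_sum; apply: TT_ext => w0.
  by rewrite /bl_lmul -cat_rcons F_sum; apply: eq_bigr => t _; rewrite cat_rcons.
under eq_bigr => t _ do rewrite exchange_big.
by rewrite exchange_big.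
Qed.

Lemma H2blk As (Z Z' : bf) Bs i k :
  T (As ++ bl_rmul Z Sb :: Z' :: Bs) i k =
  T (As ++ Z :: bl_lmul Sb Z' :: Bs) i k + T (As ++ Z :: Db :: Z' :: Bs) i k.
Proof.
rewrite /T !TT_cat -sumrD'; apply: eq_bigr => j _.
by rewrite -TT_add; apply: TT_ext => w; rewrite H2loc.
Qed.

Lemma H3blk As (Z : bf) i k :
  T (rcons As (bl_rmul Z Sb)) i k =
  bl_rmul (T (rcons As Z)) Sb i k + T (As ++ [:: Z; Db]) i k.
Proof.
rewrite /T /bl_rmul -!cats1.
have E2 : \sum_(v < m) rmul (TT (As ++ [:: Z]) F i v) (Sb v k) =
  \sum_(j < m) \sum_(v < m) TT As (fun w => rmul (F (w ++ [:: Z j v])) (Sb v k)) i j.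
  rewrite exchange_big; apply: eq_bigr => v _; rewrite TT_cat rmul_sum.
  apply: eq_bigr => j _.
  rewrite (TT_morph (phi := fun x => rmul x (Sb v k))); last 2 first.
  - exact: rmul0.
  - by move=> x y; exact: rmulD.
  by congr rmul; apply: TT_ext => w; rewrite TT1.
rewrite E2 !TT_cat -sumrD'; apply: eq_bigr => j _.
rewrite -TT_sum -TT_add; apply: TT_ext => w.
rewrite TT1 TT2 (F_sum w [::]) -sumrD'; apply: eq_bigr => v _.
by rewrite !cats1 H3'.
Qed.

Lemma T_slotB As (B1 B2 : bf) Bs i k :
  T (As ++ (fun i j => B1 i j - B2 i j) :: Bs) i k = T (As ++ B1 :: Bs) i k - T (As ++ B2 :: Bs) i k.
Proof.
rewrite /T !TT_cat -sumrB; apply: eq_bigr => j _; rewrite -TT_sub; apply: TT_ext => w /=.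
rewrite -sumrB; apply: eq_bigr => t _; rewrite -TT_sub; apply: TT_ext => w0.
exact: F_sub.
Qed.

Lemma nseq_cons (X : Type) (x : X) j l : nseq j x ++ x :: l = nseq j.+1 x ++ l.
Proof. by elim: j => //= j ->. Qed.
Lemma rcons_nseq (X : Type) (x : X) j : rcons (nseq j x) x = nseq j.+1 x.
Proof. by elim: j => //= j ->. Qed.

Lemma zm1 (V : zmodType) (x e e1 t : V) : x - e + e1 + (e + t) = x + t + e1.
Proof. by rewrite addrAC subrKA. Qed.

Variables (Wb W'b : bf).
Hypothesis hSW : bl_lmul Sb Wb = (fun i k => bl_rmul W'b Sb i k - Db i k).

Definition E a b := T (nseq a W'b ++ Db :: nseq b Wb).
Definition Vs L i k := \sum_(j < L) E j (L.-1 - j) i k.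

Lemma claim r j i k :
  T (nseq j W'b ++ bl_rmul W'b Sb :: nseq r Wb) i k + \sum_(t < r) E (j.+1 + t) (r.-1 - t) i k =
  bl_rmul (T (nseq (j.+1 + r) W'b)) Sb i k + \sum_(t < r.+1) E (j.+1 + t) (r - t) i k.
Proof.
elim: r j => [|r IH] j.
  rewrite big_ord0 addr0 big_ord1 addn0 cats1 H3blk rcons_nseq.
  by rewrite /E -nseq_cons.
rewrite /= H2blk nseq_cons hSW T_slotB.
rewrite big_ord_recl addn0 subn0.
have -> : T (nseq j W'b ++ [:: W'b, Db, Wb & nseq r Wb]) i k = E j.+1 r.+1 i k.
  by rewrite /E nseq_cons.
rewrite -/(E j.+1 r) zm1.
rewrite (eq_bigr (fun t : 'I_r => E (j.+2 + t) (r.-1 - t) i k)); last first.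
  move=> t _; have -> : (lift ord0 t : nat) = t.+1 by [].
  by congr E; lia.
rewrite IH [in RHS]big_ord_recl addn0 subn0.
rewrite [X in _ = _ + (_ + X)](eq_bigr (fun t : 'I_r.+1 => E (j.+2 + t) (r - t) i k)); last first.
  move=> t _; have -> : (lift ord0 t : nat) = t.+1 by [].
  by congr E; lia.
have -> : (j.+2 + r = (j + r.+1).+1)%N by lia.
by rewrite (addrC (E _ _ _ _)) addrA.
Qed.


Lemma step l i k :
  bl_lmul Sb (T (nseq l Wb)) i k + Vs l i k = bl_rmul (T (nseq l W'b)) Sb i k + Vs l.+1 i k.
Proof.
case: l => [|r].
  by rewrite /Vs big_ord0 addr0 big_ord1 H0blk.
rewrite /= H1blk hSW (T_slotB [::]) /=.
rewrite /Vs /= big_ord_recl subn0.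
rewrite -/(E 0 r) (_ : T [:: Db, Wb & nseq r Wb] i k = E 0 r.+1 i k) // zm1.
rewrite (eq_bigr (fun t : 'I_r => E (0.+1 + t) (r.-1 - t) i k)); last first.
  move=> t _; have -> : (lift ord0 t : nat) = t.+1 by [].
  by congr E; lia.
have := claim r 0 i k; rewrite /= => ->.
rewrite [X in _ = _ + X]big_ord_recl subn0 addrA.
rewrite [X in _ = _ + X](eq_bigr (fun t : 'I_r.+1 => E (1 + t) (r - t) i k)); last first.
  move=> t _; have -> : (lift ord0 t : nat) = t.+1 by [].
  by congr E; lia.
by rewrite add0n addrAC.
Qed.

Definition PS (W : bf) L i k := \sum_(l < L) T (nseq l W) i k.

Lemma sumstep L i k :
  bl_lmul Sb (PS Wb L) i k = bl_rmul (PS W'b L) Sb i k + Vs L i k.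
Proof.
elim: L i k => [|L IH] i k.
  rewrite /Vs /PS /bl_lmul /bl_rmul !big_ord0 addr0 !big1 // => j _.
    by rewrite big_ord0 rmul0.
  by rewrite big_ord0 lmul0.
have -> : bl_lmul Sb (PS Wb L.+1) i k = bl_lmul Sb (PS Wb L) i k + bl_lmul Sb (T (nseq L Wb)) i k.
  by rewrite /bl_lmul -sumrD'; apply: eq_bigr => j _; rewrite /PS big_ord_recr lmulD.
have -> : bl_rmul (PS W'b L.+1) Sb i k = bl_rmul (PS W'b L) Sb i k + bl_rmul (T (nseq L W'b)) Sb i k.
  by rewrite /bl_rmul -sumrD'; apply: eq_bigr => j _; rewrite /PS big_ord_recr rmulD.
by rewrite IH -addrA (addrC (Vs L i k)) step !addrA.
Qed.


Definition fullml (P : lmodType R) (g : seq A -> P) :=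
  forall a b c x y, g (a ++ (scm c x + y) :: b) = c *: g (a ++ x :: b) + g (a ++ y :: b).
Definition nilB (B : bf) K := forall (P : lmodType R) (g : seq A -> P),
  multilinear_on K g -> forall i k, TT (nseq K B) g i k = 0.

Lemma TT_scale (P : lmodType R) (Bs : seq bf) (g : seq A -> P) c i k :
  TT Bs (fun w => c *: g w) i k = c *: TT Bs g i k.
Proof.
rewrite (TT_morph (phi := fun x : P => c *: x)) //; [exact: scaler0 | exact: scalerDr].
Qed.

Lemma vanish_pre (B : bf) K (hB : nilB B K) a rest (P : lmodType R) (g : seq A -> P)
  (hg : fullml g) i k : (K <= a)%N -> TT (nseq a B ++ rest) g i k = 0.
Proof.
move=> hKa; rewrite -(subnKC hKa) nseqD -catA TT_cat big1 // => j _.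
apply: hB => a0 b0 c x y _.
rewrite -TT_scale -TT_add; apply: TT_ext => w'.
by rewrite -!catA !cat_cons hg.
Qed.

Lemma vanish_suf (B : bf) K (hB : nilB B K) b pre (P : lmodType R) (g : seq A -> P)
  (hg : fullml g) i k : (K <= b)%N -> TT (pre ++ nseq b B) g i k = 0.
Proof.
move=> hKb; rewrite -(subnK hKb) nseqD catA TT_cat big1 // => j _.
apply: TT_zero => w _; apply: hB => a0 b0 c x y _.
by rewrite !catA hg.
Qed.

Lemma Fent_fullml (a b : 'I_s) : fullml (fun w => F w a b).
Proof. by move=> a0 b0 c x y /=; rewrite Flin !mxE. Qed.

Lemma T_entry Bs i k (a b : 'I_s) : T Bs i k a b = TT Bs (fun w => F w a b) i k.
Proof.
rewrite /T (TT_morph (phi := fun x : 'M[N]_s => x a b)) //; first by rewrite mxE.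
by move=> x y; rewrite mxE.
Qed.

Lemma Vs_zero K1 K2 (h1 : nilB Wb K1) (h2 : nilB W'b K2) L i k :
  (K1 + K2 < L)%N -> Vs L i k = 0.
Proof.
move=> hL; rewrite /Vs big1 // => j _; apply/matrixP => a b.
rewrite mxE /E T_entry.
case: (leqP K2 j) => hj.
  by apply: (vanish_pre h2 _ (Fent_fullml a b)).
rewrite -cat_rcons; apply: (vanish_suf h1 _ (Fent_fullml a b)).
have := ltn_ord j; lia.
Qed.

End Chain.

Variables (n : nat) (h : (s * m)%N = n).

Lemma psum_blk L (X : 'M[M]_n) i k :
  blkG h (psum h Y F L X) i k = PS (blkG h (X - bdiag h Y)) L i k.
Proof.
rewrite /psum blk_unblk /PS; apply: eq_bigr => l _.
by rewrite /T -path_sum.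
Qed.

Lemma nil_of (X : 'M[M]_n) K :
  odot_zero h (X - bdiag h Y) K -> nilB (blkG h (X - bdiag h Y)) K.
Proof. by move=> H P g hg i k; rewrite -path_sum; apply: H. Qed.

Lemma hSW_of (S : 'M[R]_n) (X X' : 'M[M]_n) : lmul S X = rmul X' S ->
  bl_lmul (blkG h S) (blkG h (X - bdiag h Y)) =
  (fun i k => bl_rmul (blkG h (X' - bdiag h Y)) (blkG h S) i k - Db (blkG h S) i k).
Proof.
move=> E; apply: functional_extensionality => i; apply: functional_extensionality => k.
have L1 : bl_lmul (blkG h S) (blkG h (X - bdiag h Y)) i k =
    blkG h (lmul S X) i k - lmul (blkG h S i k) Y.
  have SO : \sum_(j < m) lmul (blkG h S i j) (blkG h (bdiag h Y) j k) = lmul (blkG h S i k) Y.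
    rewrite (@sum_only _ _ k) ?blk_bdiag ?eqxx // => j ne.
    by rewrite blk_bdiag (negbTE ne) lmul0.
  rewrite /bl_lmul blk_lmul -SO -sumrB; apply: eq_bigr => j _; by rewrite blkB lmulB.
have L2 : bl_rmul (blkG h (X' - bdiag h Y)) (blkG h S) i k =
    blkG h (rmul X' S) i k - rmul Y (blkG h S i k).
  have SO : \sum_(j < m) rmul (blkG h (bdiag h Y) i j) (blkG h S j k) = rmul Y (blkG h S i k).
    rewrite (@sum_only _ _ i) ?blk_bdiag ?eqxx // => j ne.
    by rewrite blk_bdiag eq_sym (negbTE ne) rmul0.
  rewrite /bl_rmul blk_rmul -SO -sumrB; apply: eq_bigr => j _; by rewrite blkB rmulB.
by rewrite L1 L2 E /Db /commS opprB subrKA.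
Qed.

Lemma sim_psum (S : 'M[R]_n) (X X' : 'M[M]_n) K1 K2 L :
  lmul S X = rmul X' S -> odot_zero h (X - bdiag h Y) K1 ->
  odot_zero h (X' - bdiag h Y) K2 -> (K1 + K2 < L)%N ->
  lmul S (psum h Y F L X) = rmul (psum h Y F L X') S.
Proof.
move=> E n1 n2 hL; apply: (@eq_blk _ _ _ h) => i k.
rewrite blk_lmul blk_rmul.
under eq_bigr => j _ do rewrite psum_blk.
under [in RHS]eq_bigr => j _ do rewrite psum_blk.
have := sumstep (hSW_of E) L i k; rewrite /bl_lmul /bl_rmul => ->.
by rewrite (Vs_zero _ (nil_of n1) (nil_of n2)) // addr0.
Qed.

Lemma psum_stab (X : 'M[M]_n) K : odot_zero h (X - bdiag h Y) K ->
  forall d, psum h Y F (K + d) X = psum h Y F K X.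
Proof.
move=> nz d; apply: (@eq_blk _ _ _ h) => i k; rewrite !psum_blk /PS.
elim: d => [|d IH]; first by rewrite addn0.
rewrite addnS big_ord_recr /= IH.
have -> : T (nseq (K + d) (blkG h (X - bdiag h Y))) i k = 0.
  apply/matrixP => a b; rewrite mxE T_entry -(cats0 (nseq _ _)).
  apply: (vanish_pre (nil_of nz) _ (Fent_fullml a b)); exact: leq_addr.
by rewrite addr0.
Qed.

Lemma of_nil (W : 'M[M]_n) K : nilB (blkG h W) K -> odot_zero h W K.
Proof.
move=> H P g hg i k.
rewrite [LHS](_ : _ = TT (nseq K (blkG h W)) g i k); first exact: H.
exact: path_sum.
Qed.

Lemma nil_mono (B : bf) K1 K2 : nilB B K1 -> nilB B (K1 + K2).
Proof.
move=> hB P g hg i k; rewrite nseqD TT_cat big1 // => j _.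
apply: hB => a b c x y hs.
rewrite -TT_scale -TT_add; apply: TT_ext_len => w' hw'.
rewrite -!catA !cat_cons; apply: hg.
by rewrite size_cat hw' size_nseq; lia.
Qed.

End WithM.

Lemma psum_indep n m1 m2 (h1 : (s * m1)%N = n) (h2 : (s * m2)%N = n) L (X : 'M[M]_n) :
  psum h1 Y F L X = psum h2 Y F L X.
Proof.
case: (posnP s) => [s0|sp].
  have hn : n = 0%N by rewrite -h1 s0.
  apply/matrixP => i; have := ltn_ord i; rewrite [X in (_ < X)%N]hn //.
have em : m2 = m1 by apply/eqP; rewrite -(eqn_pmul2l sp) h1 h2.
by subst m2; rewrite (eq_irrelevance h1 h2).
Qed.

Section Dsum.
Variables (m m' n n' : nat) (h : (s * m)%N = n) (h' : (s * m')%N = n')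
  (h'' : (s * (m + m'))%N = (n + n')%N).

Lemma bidx_l i a : bidx h'' (lshift m' i) a = lshift n' (bidx h i a).
Proof. exact: val_inj. Qed.
Lemma bidx_r i a : bidx h'' (rshift m i) a = rshift n (bidx h' i a).
Proof. apply: val_inj => /=; rewrite -h; lia. Qed.

Lemma blk_dsum (V : lmodType R) (X : 'M[V]_n) (X' : 'M[V]_n') :
  [/\ (forall i j, blkG h'' (dsum X X') (lshift m' i) (lshift m' j) = blkG h X i j),
      (forall i j, blkG h'' (dsum X X') (lshift m' i) (rshift m j) = 0),
      (forall i j, blkG h'' (dsum X X') (rshift m i) (lshift m' j) = 0) &
      (forall i j, blkG h'' (dsum X X') (rshift m i) (rshift m j) = blkG h' X' i j)].
Proof.
split=> i j; apply/matrixP => a b; rewrite /blkG [LHS]mxE ?bidx_l ?bidx_r /dsum.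
- by rewrite [RHS]mxE block_mxEul.
- by rewrite block_mxEur !mxE.
- by rewrite block_mxEdl !mxE.
- by rewrite [RHS]mxE block_mxEdr.
Qed.

Lemma blkW_dsum (X : 'M[M]_n) (X' : 'M[M]_n') :
  [/\ (forall i j, blkG h'' (dsum X X' - bdiag h'' Y) (lshift m' i) (lshift m' j) = blkG h (X - bdiag h Y) i j),
      (forall i j, blkG h'' (dsum X X' - bdiag h'' Y) (lshift m' i) (rshift m j) = 0),
      (forall i j, blkG h'' (dsum X X' - bdiag h'' Y) (rshift m i) (lshift m' j) = 0) &
      (forall i j, blkG h'' (dsum X X' - bdiag h'' Y) (rshift m i) (rshift m j) = blkG h' (X' - bdiag h' Y) i j)].
Proof.
have [D1 D2 D3 D4] := blk_dsum X X'.
split=> i j; rewrite !blkB !blk_bdiag.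
- by rewrite D1 (inj_eq (@lshift_inj _ _)).
- by rewrite D2 eq_lrshift subr0.
- by rewrite D3 eq_rlshift subr0.
- by rewrite D4 (inj_eq (@rshift_inj _ _)).
Qed.

Lemma ml_zkill (P : lmodType R) l (g : seq A -> P) : multilinear_on l g ->
  forall w1 w2, (size w1 + size w2).+1 = l -> g (w1 ++ 0 :: w2) = 0.
Proof.
move=> hg w1 w2 hs; have := hg w1 w2 1 0 0 hs.
rewrite scm1 addr0 scale1r => E.
by apply: (addrI (g (w1 ++ 0 :: w2))); rewrite addr0 -E.
Qed.

Lemma nilp_dsum (X : 'M[M]_n) (X' : 'M[M]_n') K1 K2 :
  odot_zero h (X - bdiag h Y) K1 -> odot_zero h' (X' - bdiag h' Y) K2 ->
  odot_zero h'' (dsum X X' - bdiag h'' Y) (K1 + K2).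
Proof.
move=> n1 n2; apply: of_nil => P g hg i k.
have [Hll Hlr Hrl Hrr] := blkW_dsum X X'.
have [T1 T2 T3 T4] := TT_bdiag Hll Hlr Hrl Hrr (ml_zkill hg).
rewrite -(splitK i) -(splitK k); case: (split i) => i0; case: (split k) => k0 /=.
- by rewrite T1; apply: (nil_mono h (nil_of n1)).
- exact: T2.
- exact: T3.
- by rewrite T4; move: hg; rewrite addnC => hg; apply: (nil_mono h' (nil_of n2)).
Qed.

Lemma psum_dsum L (X : 'M[M]_n) (X' : 'M[M]_n') :
  psum h'' Y F L (dsum X X') = dsum (psum h Y F L X) (psum h' Y F L X').
Proof.
apply: (@eq_blk _ _ _ h'') => i k.
have [Hll Hlr Hrl Hrr] := blkW_dsum X X'.
have [D1 D2 D3 D4] := blk_dsum (psum h Y F L X) (psum h' Y F L X').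
rewrite -(splitK i) -(splitK k); case: (split i) => i0; case: (split k) => k0 /=;
  rewrite ?D1 ?D2 ?D3 ?D4 !psum_blk /PS.
- apply: eq_bigr => l _; have [T1 _ _ _] := TT_bdiag Hll Hlr Hrl Hrr (g := F) (l := l)
     (fun w1 w2 _ => F_zero w1 w2); exact: T1.
- apply: big1 => l _; have [_ T2 _ _] := TT_bdiag Hll Hlr Hrl Hrr (g := F) (l := l)
     (fun w1 w2 _ => F_zero w1 w2); exact: T2.
- apply: big1 => l _; have [_ _ T3 _] := TT_bdiag Hll Hlr Hrl Hrr (g := F) (l := l)
     (fun w1 w2 _ => F_zero w1 w2); exact: T3.
- apply: eq_bigr => l _; have [_ _ _ T4] := TT_bdiag Hll Hlr Hrl Hrr (g := F) (l := l)
     (fun w1 w2 _ => F_zero w1 w2); exact: T4.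
Qed.

End Dsum.

Definition Pgood n (X : 'M[M]_n) (v : 'M[N]_n) : Prop :=
  exists m (h : (s * m)%N = n), [/\ (0 < m)%N, nilpot h Y X &
    exists L, forall L', (L <= L')%N -> v = psum h Y F L' X].
Definition fdef n (X : 'M[M]_n) : 'M[N]_n := epsilon (inhabits 0) (@Pgood n X).

Lemma fE m n (h : (s * m)%N = n) (X : 'M[M]_n) : (0 < m)%N -> nilpot h Y X ->
  exists L, forall L', (L <= L')%N -> fdef X = psum h Y F L' X.
Proof.
move=> mp hn; have [K nz] := hn.
have ex : exists v, Pgood X v.
  exists (psum h Y F K X), m, h; split => //; exists K => L' hL.
  by rewrite -(subnKC hL) psum_stab.
have [m2 [h2 [_ _ [L2 HL2]]]] := epsilon_spec (inhabits 0) (@Pgood n X) ex.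
exists L2 => L' hL; rewrite /fdef (HL2 L' hL); exact: psum_indep.
Qed.

Lemma hsumP m m' n n' (h : (s * m)%N = n) (h' : (s * m')%N = n') :
  (s * (m + m'))%N = (n + n')%N.
Proof. by rewrite mulnDr h h'. Qed.

Lemma main_result : exists f : forall n, 'M[M]_n -> 'M[N]_n,
    (forall m n (h : (s * m)%N = n) (X : 'M[M]_n), (0 < m)%N -> nilpot h Y X ->
       exists L, forall L', (L <= L')%N -> f n X = psum h Y F L' X)
    /\ nc_fun (NilpD Y) f.
Proof.
exists fdef; split; first exact: fE.
have dsumD : forall n n' (X : 'M[M]_n) (X' : 'M[M]_n'), NilpD Y X -> NilpD Y X' ->
    exists m m' (h : (s * m)%N = n) (h' : (s * m')%N = n'),
    [/\ (0 < m)%N, (0 < m')%N, nilpot h Y X, nilpot h' Y X' &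
        nilpot (hsumP h h') Y (dsum X X')].
  move=> n n' X X' [m [h [mp hX]]] [m' [h' [mp' hX']]].
  exists m, m', h, h'; split => //.
  have [K1 n1] := hX; have [K2 n2] := hX'.
  by exists (K1 + K2); apply: nilp_dsum.
split.
- move=> n n' X X' dX dX'.
  have [m [m' [h [h' [mp mp' _ _ hD]]]]] := dsumD _ _ _ _ dX dX'.
  exists (m + m')%N, (hsumP h h'); split => //; by rewrite addn_gt0 mp.
- move=> n n' X X' dX dX'.
  have [m [m' [h [h' [mp mp' hX hX' hD]]]]] := dsumD _ _ _ _ dX dX'.
  have [L1 E1] := fE mp hX; have [L2 E2] := fE mp' hX'.
  have [L3 E3] := fE (h := hsumP h h') (ltn_addr m' mp) hD.
  rewrite (E3 (L1 + L2 + L3)%N) ?leq_addl // (E1 (L1 + L2 + L3)%N); last by lia.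
  rewrite (E2 (L1 + L2 + L3)%N); last by lia.
  exact: psum_dsum.
- move=> n X S T hST hTS [m [h [mp hX]]] [m2 [h2 [mp2 hX2]]].
  case: (posnP s) => [s0|sp].
    have hn : n = 0%N by rewrite -h s0.
    apply/matrixP => i; have := ltn_ord i; rewrite [X in (_ < X)%N]hn //.
  have em : m2 = m by apply/eqP; rewrite -(eqn_pmul2l sp) h h2.
  subst m2; have eh : h2 = h := eq_irrelevance _ _; subst h2.
  set X' := rmul (lmul S X) T in hX2 *.
  have EX : lmul S X = rmul X' S by rewrite /X' rmul_rmul hTS rmul1.
  have [K1 n1] := hX; have [K2 n2] := hX2.
  have [L1 E1] := fE mp hX; have [L2 E2] := fE mp hX2.
  pose L := (L1 + L2 + K1 + K2 + 1)%N.
  rewrite (E1 L); last by rewrite /L; lia.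
  rewrite (E2 L); last by rewrite /L; lia.
  rewrite (sim_psum EX n1 n2); last by rewrite /L; lia.
  by rewrite rmul_rmul hST rmul1.
Qed.

End Main.


Unset Implicit Arguments.

Theorem theorem5p13 (R : comNzRingType) (M N : lmodType R) (s : nat)
  (Y : 'M[M]_s) (F : seq 'M[M]_s -> 'M[N]_s)
  (Flin : multilinear F)
  (H0 : forall S : 'M[R]_s,
      lmul S (F [::]) - rmul (F [::]) S = F [:: commS S Y])
  (H1 : forall (S : 'M[R]_s) (Z : 'M[M]_s) (Zs : seq 'M[M]_s),
      lmul S (F (Z :: Zs)) - F (lmul S Z :: Zs) = F (commS S Y :: Z :: Zs))
  (H2 : forall (S : 'M[R]_s) (a b : seq 'M[M]_s) (Z Z' : 'M[M]_s),
      F (a ++ rmul Z S :: Z' :: b) - F (a ++ Z :: lmul S Z' :: b)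
      = F (a ++ Z :: commS S Y :: Z' :: b))
  (H3 : forall (S : 'M[R]_s) (a : seq 'M[M]_s) (Z : 'M[M]_s),
      F (rcons a (rmul Z S)) - rmul (F (rcons a Z)) S
      = F (a ++ [:: Z; commS S Y])) :
  exists f : forall n, 'M[M]_n -> 'M[N]_n,
    (forall m n (h : (s * m)%N = n) (X : 'M[M]_n), (0 < m)%N -> nilpot h Y X ->
       exists L, forall L', (L <= L')%N -> f n X = psum h Y F L' X)
    /\ nc_fun (NilpD Y) f.
Proof. exact: (main_result Flin H0 H1 H2 H3). Qed.
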